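(* Let $d_1\le\dots\le d_n$ be a \textsc{2-Visits} instance with discretized sequence $A$, and let $\langle a_i,\dots,a_j\rangle$ be a cluster of $A$. In any feasible schedule in which all secondary visits are placed in gaps and the secondary visits appear in order of non-decreasing induced deadlines, the primary visits of nodes $i,\dots,j$ occupy exactly the positions $a_i,\dots,a_j$ (in some order).
   Context: \textsc{2-Visits} (primary/secondary formulation): given non-decreasing positive integers $d_1\le\dots\le d_n$, a feasible schedule is a schedule of length $2n$ (each position $1,\dots,2n$ holds one visit) containing one primary and one secondary visit of each node $i\in[n]$, such that the primary visit of $i$ is at position at most $d_i$, and the secondary visit of $i$ is either before its primary visit or at most $d_i$ positions after its primary visit. The discretized sequence $A=\langle a_1,\dots,a_n\rangle$ is defined by $a_n=d_n$ and $a_i=\min\{a_{i+1}-1,d_i\}$ for $i<n$; a gap is a position $p\in[2n]$ with $p\notin A$. A cluster is a maximal contiguous subsequence $\langle a_p,\dots,a_q\rangle$ of $A$ consisting of consecutive integers. If the primary visit of node $i$ is at position $t_i$, its induced deadline is $d_i+t_i$. Standing assumptions: all entries of $A$ are positive and all $d_i\le 2n$. *)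

(* Defs.v *)
(* Nodes are indexed 1..n, positions 1..2n. *)
From mathcomp Require Import all_boot.
Set Implicit Arguments. Unset Strict Implicit. Unset Printing Implicit Defensive.

Definition nondecreasing (n : nat) (d : nat -> nat) : Prop :=
  forall i, 1 <= i -> i < n -> d i <= d i.+1.

Definition positive_deadlines (n : nat) (d : nat -> nat) : Prop :=
  forall i, 1 <= i <= n -> 0 < d i.

(* disc_aux n d k = a_{n-k}:  a_n = d_n, a_i = min (a_{i+1} - 1) d_i *)
Fixpoint disc_aux (n : nat) (d : nat -> nat) (k : nat) : nat :=
  match k with
  | 0 => d n
  | k'.+1 => minn (disc_aux n d k' - 1) (d (n - k))
  end.

Definition disc (n : nat) (d : nat -> nat) (i : nat) : nat := disc_aux n d (n - i).

(* A schedule of length 2n given by primary positions t i and secondary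
   positions s i (i in [n]); all 2n visits occupy distinct positions in
   [1, 2n], hence every position holds exactly one visit. *)
Definition feasible_schedule (n : nat) (d t s : nat -> nat) : Prop :=
  (forall i, 1 <= i <= n -> 1 <= t i <= 2 * n /\ 1 <= s i <= 2 * n) /\
  (forall i k, 1 <= i <= n -> 1 <= k <= n -> i <> k -> t i <> t k /\ s i <> s k) /\
  (forall i k, 1 <= i <= n -> 1 <= k <= n -> t i <> s k) /\
  (forall i, 1 <= i <= n ->
     t i <= d i /\ (s i < t i \/ s i <= t i + d i)).

Definition is_gap (n : nat) (d : nat -> nat) (p : nat) : Prop :=
  1 <= p <= 2 * n /\ forall k, 1 <= k <= n -> disc n d k <> p.

Definition is_cluster (n : nat) (d : nat -> nat) (p q : nat) : Prop :=
  1 <= p /\ p <= q /\ q <= n /\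
  (forall k, p <= k -> k < q -> disc n d k.+1 = (disc n d k).+1) /\
  (p = 1 \/ disc n d p <> (disc n d p.-1).+1) /\
  (q = n \/ disc n d q.+1 <> (disc n d q).+1).

Definition induced_deadline (d t : nat -> nat) (i : nat) : nat := d i + t i.

(* Main.v *)
Require Import Defs.
From mathcomp Require Import all_boot.
From mathcomp Require Import zify.

Lemma disc_rec n d k : 1 <= k < n -> disc n d k = minn (disc n d k.+1 - 1) (d k).
Proof.
move=> Hk; rewrite /disc.
have -> : n - k = (n - k.+1).+1 by lia.
rewrite /=; congr minn; congr d; lia.
Qed.

Lemma discn n d : disc n d n = d n.
Proof. by rewrite /disc subnn. Qed.

Lemma gen_count (f g : nat -> nat) m :
  (forall k l, 1 <= k <= m -> 1 <= l <= m -> f k = f l -> k = l) ->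
  (forall k, 1 <= k <= m -> exists2 l, 1 <= l <= m & f k = g l) ->
  forall l, 1 <= l <= m -> exists2 k, 1 <= k <= m & f k = g l.
Proof.
move=> Hinj Hin l Hl.
have U : uniq (map f (iota 1 m)).
  rewrite map_inj_in_uniq ?iota_uniq // => x y; rewrite !mem_iota => Hx Hy.
  apply: Hinj; lia.
have S : {subset map f (iota 1 m) <= map g (iota 1 m)}.
  move=> x /mapP [k]; rewrite mem_iota => Hk ->.
  have [l' Hl' ->] := Hin k ltac:(lia).
  apply: map_f; rewrite mem_iota; lia.
have [_ E] := uniq_min_size U S ltac:(by rewrite !size_map).
have : g l \in map f (iota 1 m) by rewrite E; apply: map_f; rewrite mem_iota; lia.
case/mapP=> k; rewrite mem_iota => Hk ->; exists k => //; lia.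
Qed.

Theorem lemma6 (n : nat) (d t s : nat -> nat) (i j : nat) :
  nondecreasing n d ->
  positive_deadlines n d ->
  (forall k, 1 <= k <= n -> 0 < disc n d k) ->
  (forall k, 1 <= k <= n -> d k <= 2 * n) ->
  is_cluster n d i j ->
  feasible_schedule n d t s ->
  (forall k, 1 <= k <= n -> is_gap n d (s k)) ->
  (forall k l, 1 <= k <= n -> 1 <= l <= n -> s k < s l ->
     induced_deadline d t k <= induced_deadline d t l) ->
  forall p, (exists2 k, i <= k <= j & t k = p) <-> (exists2 k, i <= k <= j & disc n d k = p).
Proof.
move=> Hnd Hpos Hdpos Hd2n [Hi [Hij [Hjn [Hcl [Hleft Hright]]]]] [Hr [Hdist [Hts Hdl]]] Hgap _ p.
have dmono : forall k l, 1 <= k -> k <= l -> l <= n -> d k <= d l.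
  move=> k l Hk Hkl Hln; elim: l Hkl Hln => [|l IH] Hkl Hln; first lia.
  case: (ltnP k l.+1) => H; last by have -> : k = l.+1 by lia.
  apply: leq_trans (IH _ _) (Hnd _ _ _); lia.
have dstep : forall k, 1 <= k < n -> disc n d k < disc n d k.+1.
  move=> k Hk; have := Hdpos k ltac:(lia); rewrite disc_rec //; lia.
have dmon : forall k l, 1 <= k -> k < l -> l <= n -> disc n d k < disc n d l.
  move=> k l Hk Hkl Hln; elim: l Hkl Hln => [|l IH] Hkl Hln; first lia.
  case: (ltnP k l) => H.
    apply: ltn_trans (IH H _) (dstep _ _); lia.
  have -> : l = k by lia. apply: dstep; lia.
have dinv : forall k l, 1 <= k <= n -> 1 <= l <= n -> disc n d k <= disc n d l -> k <= l.
  move=> k l Hk Hl H; case: (leqP k l) => // H'; have := dmon l k; lia.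
have dinj : forall k l, 1 <= k <= n -> 1 <= l <= n -> disc n d k = disc n d l -> k = l.
  move=> k l Hk Hl H; have := dinv k l Hk Hl; have := dinv l k Hl Hk; lia.
have dled : forall k, 1 <= k <= n -> disc n d k <= d k.
  move=> k Hk; case: (ltnP k n) => H; last by (have -> : k = n by lia); rewrite discn.
  rewrite disc_rec; lia.
have d2n : forall k, 1 <= k <= n -> disc n d k <= 2 * n.
  move=> k Hk; apply: leq_trans (dled k Hk) (Hd2n k Hk).
have tinj : forall k l, 1 <= k <= n -> 1 <= l <= n -> t k = t l -> k = l.
  move=> k l Hk Hl H; case: (k =P l) => // Hne; by have [] := Hdist k l Hk Hl Hne.
have cover : forall q, 1 <= q <= 2 * n ->
    (exists2 k, 1 <= k <= n & t k = q) \/ (exists2 k, 1 <= k <= n & s k = q).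
  move=> q Hq.
  have U : uniq (map t (iota 1 n) ++ map s (iota 1 n)).
    rewrite cat_uniq; apply/and3P; split.
    - rewrite map_inj_in_uniq ?iota_uniq // => x y; rewrite !mem_iota => Hx Hy.
      apply: tinj; lia.
    - apply/hasPn => x /mapP [k]; rewrite mem_iota => Hk ->.
      apply/mapP => [[l]]; rewrite mem_iota => Hl E.
      by apply: (Hts l k); [lia|lia|].
    - rewrite map_inj_in_uniq ?iota_uniq // => x y; rewrite !mem_iota => Hx Hy H.
      case: (x =P y) => // Hne; have [] := Hdist x y ltac:(lia) ltac:(lia) Hne; done.
  have S : {subset map t (iota 1 n) ++ map s (iota 1 n) <= iota 1 (2 * n)}.
    move=> x; rewrite mem_cat => /orP [] /mapP [k]; rewrite mem_iota => Hk ->;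
      rewrite mem_iota; have := Hr k ltac:(lia); lia.
  have [_ E] := uniq_min_size U S ltac:(by rewrite size_cat !size_map !size_iota; lia).
  have : q \in map t (iota 1 n) ++ map s (iota 1 n) by rewrite E mem_iota; lia.
  rewrite mem_cat => /orP [] /mapP [k]; rewrite mem_iota => Hk ->.
    by left; exists k => //; lia.
  by right; exists k => //; lia.
have dt : forall l, 1 <= l <= n -> exists2 k, 1 <= k <= n & disc n d l = t k.
  move=> l Hl; move: (Hdpos l Hl) (d2n l Hl) => H1 H2.
  case: (cover (disc n d l) ltac:(lia)) => [[k Hk E]|[k Hk E]].
    by exists k.
  by have [_ G] := Hgap k Hk; have := G l Hl; rewrite E.
have td : forall k, 1 <= k <= n -> exists2 l, 1 <= l <= n & t k = disc n d l.
  move=> k Hk; have [l Hl E] := @gen_count (disc n d) t n dinj dt k Hk.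
  by exists l.
have pref : forall m, m <= n -> (forall k, 1 <= k <= m -> t k <= disc n d m) ->
    (forall k, 1 <= k <= m -> exists2 l, 1 <= l <= m & t k = disc n d l) /\
    (forall l, 1 <= l <= m -> exists2 k, 1 <= k <= m & t k = disc n d l).
  move=> m Hm Hc.
  have H1 : forall k, 1 <= k <= m -> exists2 l, 1 <= l <= m & t k = disc n d l.
    move=> k Hk; have [l Hl E] := td k ltac:(lia); exists l => //.
    have := Hc k Hk; rewrite E => H; have := dinv l m Hl ltac:(lia) H; lia.
  split => //; apply: gen_count => // k l Hk Hl; apply: tinj; lia.
have Pj := pref j Hjn.
have Pj' : forall k, 1 <= k <= j -> t k <= disc n d j.
  move=> k Hk; case: (ltnP j n) => Hjn'; last first.
    have Hj : j = n by lia.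
    subst j; have [l Hl ->] := td k Hk; case: (ltnP l n) => H.
      by apply: ltnW; apply: dmon; lia.
    by have -> : l = n by lia.
  have Hj : disc n d j.+1 <> (disc n d j).+1 by case: Hright; lia.
  have Ej : disc n d j = d j.
    have := Hdpos j.+1 ltac:(lia); have := disc_rec n d j ltac:(lia); lia.
  rewrite Ej; apply: leq_trans (proj1 (Hdl k ltac:(lia))) (dmono _ _ _ _ _); lia.
have [Pj1 Pj2] := Pj Pj'.
have Pi : (forall k, 1 <= k <= i.-1 -> exists2 l, 1 <= l <= i.-1 & t k = disc n d l) /\
    (forall l, 1 <= l <= i.-1 -> exists2 k, 1 <= k <= i.-1 & t k = disc n d l).
  case: (leqP i 1) => Hi1'.
    have Hi1 : i = 1 by lia.
    subst i; split => k /=; lia.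
  have Hi1 : disc n d i <> (disc n d i.-1).+1 by case: Hleft; lia.
  apply: pref; first lia.
  have Ei : disc n d i.-1 = d i.-1.
    have := Hdpos i ltac:(lia); have := disc_rec n d i.-1 ltac:(lia).
    have -> : i.-1.+1 = i by lia. lia.
  move=> k Hk; rewrite Ei; apply: leq_trans (proj1 (Hdl k ltac:(lia))) (dmono _ _ _ _ _); lia.
have [Pi1 Pi2] := Pi.
split.
- move=> [k Hk <-].
  have [l Hl E] := Pj1 k ltac:(lia).
  exists l => //; case: (leqP i l) => H; first lia.
  have [k' Hk' E'] := Pi2 l ltac:(lia).
  have := tinj k k' ltac:(lia) ltac:(lia) ltac:(congruence); lia.
- move=> [l Hl <-].
  have [k Hk E] := Pj2 l ltac:(lia).
  exists k => //; case: (leqP i k) => H; first lia.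
  have [l' Hl' E'] := Pi1 k ltac:(lia).
  have := dinj l l' ltac:(lia) ltac:(lia) ltac:(congruence); lia.
Qed.
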